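(* Let $\overline{G}$ be an acyclic amplified graph with finitely many vertices, and let $S$ be the set of sources of $\overline{G}$. Let $H\subseteq\bigoplus_{v\in\overline{G}^0}\mathbb{Z}$ be the monoid generated by $\{\delta_v: v\in\overline{G}^0\}\cup\{\delta_v-\sum_{e\in T}\delta_{r(e)} : v\in\overline{G}^0_{\mathrm{inf}},\ T\text{ a finite subset of }s^{-1}(v)\}$. If $(n_v)_{v\in\overline{G}^0}\in H$ satisfies $n_v\ge1$ for all $v\in S$, then there exist $(m_v)_{v\in\overline{G}^0}\in H$ with $m_v\ge1$ for all $v\in\overline{G}^0$ and a group isomorphism $\alpha\colon\bigoplus_{v\in\overline{G}^0}\mathbb{Z}\to\bigoplus_{v\in\overline{G}^0}\mathbb{Z}$ such that $\alpha(H)=H$ and $\alpha((n_v)_v)=(m_v)_v$.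
   Context: A graph $E=(E^0,E^1,r,s)$ is amplified if for every edge $e$ the number of edges from $s(e)$ to $r(e)$ is countably infinite; it is acyclic if it has no cycles. A source is a vertex $v$ with $r^{-1}(v)=\emptyset$. $\overline{G}^0_{\mathrm{inf}}$ denotes the set of infinite emitters (vertices $v$ with $s^{-1}(v)$ infinite). $\delta_v$ denotes the standard basis element at $v$. *)

(* Defs.v *)
From HB Require Import structures.
From mathcomp Require Import all_boot all_order all_algebra.
From Stdlib Require Import List Relations.
Set Implicit Arguments. Unset Strict Implicit. Unset Printing Implicit Defensive.
Import GRing.Theory Num.Theory.
Local Open Scope ring_scope.

Definition countably_infinite (A : Type) : Prop :=
  exists f : nat -> A, bijective f.

Definition amplified (V E1 : Type) (s r : E1 -> V) : Prop :=
  forall e : E1, countably_infinite {f : E1 | s f = s e /\ r f = r e}.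

Definition adj (V E1 : Type) (s r : E1 -> V) : V -> V -> Prop :=
  fun v w => exists e : E1, s e = v /\ r e = w.

Definition acyclic (V E1 : Type) (s r : E1 -> V) : Prop :=
  forall v : V, ~ clos_trans V (adj s r) v v.

Definition is_source (V E1 : Type) (r : E1 -> V) (v : V) : Prop :=
  forall e : E1, r e <> v.

Definition infinite_emitter (V E1 : Type) (s : E1 -> V) (v : V) : Prop :=
  forall l : list E1, exists e : E1, s e = v /\ ~ In e l.

(* standard basis element delta_v of (+)_{v in V} Z = Z^V (V finite) *)
Definition delta (V : finType) (v : V) : {ffun V -> int} :=
  [ffun w => ((w == v) : nat)%:Z].

Definition H_gen (V : finType) (E1 : Type) (s r : E1 -> V)
  (x : {ffun V -> int}) : Prop :=
  (exists v : V, x = delta v) \/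
  (exists (v : V) (T : list E1),
      infinite_emitter s v /\ NoDup T /\ (forall e, In e T -> s e = v) /\
      x = delta v - \sum_(e <- T) delta (r e)).

Inductive monoid_gen (M : nmodType) (X : M -> Prop) : M -> Prop :=
| mg0 : monoid_gen X 0
| mg_gen : forall x, X x -> monoid_gen X x
| mg_add : forall x y, monoid_gen X x -> monoid_gen X y -> monoid_gen X (x + y).

(* Main.v *)
Require Import Defs.
From mathcomp Require Import all_boot all_order all_algebra.
From Stdlib Require Import List Relations.
From mathcomp Require Import zify ring.
From Stdlib Require Import Classical ProofIrrelevance ClassicalEpsilon.
Import GRing.Theory Num.Theory.
Local Open Scope ring_scope.

Definition gen {V : finType} (v : V) (k : V -> nat) : {ffun V -> int} :=
  [ffun u => ((u == v) : nat)%:Z - (k u)%:Z].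
Definition Good {V : finType} {E1 : Type} (s r : E1 -> V) (v : V) (k : V -> nat) :=
  infinite_emitter s v /\ forall w, (0 < k w)%N -> adj s r v w.

Lemma sum_delta_count {V : finType} {E1 : Type} (r : E1 -> V) (T : list E1) u :
  (\sum_(e <- T) delta (r e)) u = (seq.count (fun e => r e == u) T)%:Z.
Proof.
elim: T => [|e T IH]; first by rewrite big_nil ffunE.
rewrite big_cons ffunE IH ffunE /= eq_sym; case: (r e == u) => /=; lia.
Qed.

Lemma count_pos_In {V : finType} {E1 : Type} (r : E1 -> V) (T : list E1) u :
  (0 < seq.count (fun e => r e == u) T)%N -> exists e, In e T /\ r e = u.
Proof.
elim: T => [|e T IH] //=. case: (r e =P u) => [<-|_] /= h.
  by exists e; split; [left|].
have [e' [H1 H2]] := IH h. by exists e'; split; [right|].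
Qed.

Lemma In_count_pos {V : finType} {E1 : Type} (r : E1 -> V) (T : list E1) e :
  In e T -> (0 < seq.count (fun e' => r e' == r e) T)%N.
Proof.
elim: T => [|e' T IH] //= [->|H]; first by rewrite eqxx.
have := IH H; lia.
Qed.

Lemma count_app {E1 : Type} (p : pred E1) (a b : list E1) :
  seq.count p (List.app a b) = (seq.count p a + seq.count p b)%N.
Proof. elim: a => //= x a ->; lia. Qed.

Lemma M_ind {V : finType} {E1 : Type} (s r : E1 -> V) (P : {ffun V -> int} -> Prop) :
  P 0 -> (forall x y, P x -> P y -> P (x + y)) -> (forall v, P (delta v)) ->
  (forall v k, Good s r v k -> P (gen v k)) ->
  forall x, monoid_gen (H_gen s r) x -> P x.
Proof.
move=> P0 PD Pd Pg x; elim=> [|y Hy|y z _ Py _ Pz] //; last by apply: PD.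
case: Hy => [[v ->]|[v [T [Hinf [HND [Hs ->]]]]]] //.
have -> : delta v - \sum_(e <- T) delta (r e) =
          gen v (fun u => seq.count (fun e => r e == u) T).
  by apply/ffunP => u; rewrite !ffunE sum_delta_count.
apply: Pg; split => // w /count_pos_In [e [He <-]]; exists e; split => //.
exact: Hs.
Qed.

Lemma fam {V : finType} {E1 : Type} {s r : E1 -> V} (Hampl : amplified s r) v w :
  adj s r v w -> exists g : nat -> E1, injective g /\ forall i, s (g i) = v /\ r (g i) = w.
Proof.
move=> [e [<- <-]]; case: (Hampl e) => f [f' ff' f'f].
exists (fun i => proj1_sig (f i)); split; last by move=> i; case: (f i).
move=> i j /= h.
have : f i = f j by apply: eq_sig_hprop => // x p q; apply: proof_irrelevance.
by move/(f_equal f'); rewrite !ff'.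
Qed.

Lemma inj_NoDup {E1 : Type} (g : nat -> E1) : injective g ->
  forall n a, NoDup (List.map g (List.seq a n)).
Proof.
move=> gi; elim=> [|n IH] a /=; first by constructor.
constructor; last exact: IH.
move=> /in_map_iff [i [Hi Hin]]; apply in_seq in Hin.
have := gi _ _ Hi; lia.
Qed.

Lemma count_block {V : finType} {E1 : Type} (r : E1 -> V) (g : nat -> E1) w u :
  (forall i, r (g i) = w) -> forall n a,
  seq.count (fun e => r e == u) (List.map g (List.seq a n)) = if w == u then n else 0%N.
Proof.
move=> Hr; elim=> [|n IH] a /=; first by case: (w == u).
rewrite IH Hr; case: (w == u) => /=; lia.
Qed.

Lemma build {V : finType} {E1 : Type} {s r : E1 -> V} (Hampl : amplified s r) v
  (k : V -> nat) (Hk : forall w, (0 < k w)%N -> adj s r v w) (ws : list V) :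
  uniq ws -> exists T : list E1, NoDup T /\ (forall e, In e T -> s e = v) /\
    forall u, seq.count (fun e => r e == u) T = if u \in ws then k u else 0%N.
Proof.
elim: ws => [|w ws IH] /=.
  by move=> _; exists nil; split; [constructor|split => // u; rewrite seq.in_nil].
move=> /andP [wn uws]; have [T [ND [Hs Hc]]] := IH uws.
case: (posnP (k w)) => [k0|kpos].
  exists T; split => //; split => // u; rewrite Hc seq.in_cons.
  by case: (u =P w) => [->|_] //=; rewrite (negbTE wn) k0.
have [g [gi gsr]] := fam Hampl _ _ (Hk w kpos).
exists (List.app (List.map g (List.seq 0 (k w))) T); split; last split.
- apply: NoDup_app => //; first exact: inj_NoDup.
  move=> a /in_map_iff [i [<- _]] HT.
  have := @In_count_pos _ _ r _ _ HT; rewrite Hc (gsr i).2; rewrite (negbTE wn); lia.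
- by move=> e /in_app_iff [/in_map_iff [i [<- _]]|/Hs] //; case: (gsr i).
- move=> u; rewrite count_app Hc (count_block r g w u (fun i => (gsr i).2)) seq.in_cons.
  case: (w =P u) => [<-|nwu]; first by rewrite eqxx (negbTE wn) /= addn0.
  by rewrite (introF eqP (fun h => nwu (esym h))) /=.
Qed.

Lemma genM {V : finType} {E1 : Type} {s r : E1 -> V} (Hampl : amplified s r) v k :
  Good s r v k -> monoid_gen (H_gen s r) (gen v k).
Proof.
move=> HG; have [T [ND [Hs Hc]]] := build Hampl v k HG.2 _ (enum_uniq V).
apply: mg_gen; right; exists v, T; split; first exact HG.1.
split => //; split => //.
by apply/ffunP => u; rewrite !ffunE sum_delta_count Hc mem_enum.
Qed.

Lemma M_mulrn {V : finType} {E1 : Type} {s r : E1 -> V} x n :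
  monoid_gen (H_gen s r) x -> monoid_gen (H_gen s r) (x *+ n).
Proof.
move=> Mx; elim: n => [|n IH]; first by rewrite mulr0n; apply: mg0.
by rewrite mulrS; apply: mg_add.
Qed.

Lemma emitter_of_adj {V : finType} {E1 : Type} {s r : E1 -> V} (Hampl : amplified s r) v w :
  adj s r v w -> infinite_emitter s v.
Proof.
move=> /(fam Hampl) [g [gi gsr]] l; apply: NNPP => H.
have Hin : forall e, s e = v -> In e l.
  move=> e se; apply: NNPP => ni; apply: H; by exists e.
have := NoDup_incl_length (inj_NoDup g gi (length l).+1 0).
rewrite length_map length_seq => h.
have : ((length l).+1 <= length l)%coq_nat.
  apply: h => a /in_map_iff [i [<- _]]; exact: Hin _ (gsr i).1.
lia.
Qed.

Definition beta {V : finType} (w v : V) (c : int) (x : {ffun V -> int}) : {ffun V -> int} :=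
  [ffun u => x u + (if u == w then c * x v else 0)].

Ltac pt := repeat (rewrite ?eqxx; match goal with |- context [?a == ?b] =>
   case: (a =P b) => ?; try subst end); try (exfalso; congruence); simpl; nia.

Lemma betaD {V : finType} (w v : V) c x y : beta w v c (x + y) = beta w v c x + beta w v c y.
Proof. apply/ffunP => u; rewrite !ffunE; case: (u == w); ring. Qed.

Lemma beta0 {V : finType} (w v : V) c : beta w v c 0 = 0.
Proof. apply/ffunP => u; rewrite !ffunE; case: (u == w); ring. Qed.

Lemma beta_delta_ne {V : finType} (w v : V) c u : u <> v -> beta w v c (delta u) = delta u.
Proof. move=> nuv; apply/ffunP => z; rewrite !ffunE; pt. Qed.

Lemma beta_cancel {V : finType} (w v : V) c : v <> w -> cancel (beta w v c) (beta w v (- c)).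
Proof. move=> nvw x; apply/ffunP => z; rewrite !ffunE; pt. Qed.

Lemma no_loop {V : finType} {E1 : Type} {s r : E1 -> V} (Hacyc : acyclic s r) v w :
  adj s r v w -> v <> w.
Proof. by move=> h e; subst; apply: (Hacyc w); apply: t_step. Qed.

Lemma kv0 {V : finType} {E1 : Type} {s r : E1 -> V} (Hacyc : acyclic s r) v k :
  Good s r v k -> k v = 0%N.
Proof. move=> HG; case: (posnP (k v)) => // /HG.2 /(no_loop Hacyc) //. Qed.

Lemma beta_fwd {V : finType} {E1 : Type} {s r : E1 -> V} (Hacyc : acyclic s r)
  (Hampl : amplified s r) v w (c0 : nat) : adj s r v w ->
  forall x, monoid_gen (H_gen s r) x -> monoid_gen (H_gen s r) (beta w v c0%:Z x).
Proof.
move=> Hvw; have nvw := no_loop Hacyc _ _ Hvw.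
have G1 : Good s r v (fun z => ((z == w) : nat)).
  split; first exact: emitter_of_adj Hampl _ _ Hvw.
  by move=> z; case: (z =P w) => [->|].
apply: M_ind.
- rewrite beta0; exact: mg0.
- by move=> x y Mx My; rewrite betaD; apply: mg_add.
- move=> u; case: (u =P v) => [->|nuv]; last by rewrite beta_delta_ne //; apply: mg_gen; left; exists u.
  have -> : beta w v c0%:Z (delta v) = delta v + delta w *+ c0.
    apply/ffunP => z; rewrite !ffunE ffunMnE !ffunE; pt.
  apply: mg_add; first by apply: mg_gen; left; exists v.
  by apply: M_mulrn; apply: mg_gen; left; exists w.
- move=> u k HG; case: (u =P v) => [euv|nuv]; first subst u.
    have k0 := kv0 Hacyc _ _ HG.
    have -> : beta w v c0%:Z (gen v k) = gen v k + delta w *+ c0.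
      apply/ffunP => z; rewrite !ffunE ffunMnE !ffunE k0; pt.
    apply: mg_add; first exact: genM.
    by apply: M_mulrn; apply: mg_gen; left; exists w.
  set k' := fun z => (k z + (if z == v then c0 * k v else 0))%N.
  have -> : beta w v c0%:Z (gen u k) =
     gen u k' + gen v (fun z => ((z == w) : nat)) *+ (c0 * k v).
    apply/ffunP => z; rewrite !ffunE ffunMnE !ffunE /k'; pt.
  apply: mg_add; last by apply: M_mulrn; apply: genM.
  apply: genM => //; split; first exact HG.1.
  move=> z; rewrite /k'; case: (z =P v) => [->|_].
    case: (posnP (k v)) => [->|/HG.2] //; by rewrite muln0.
  by rewrite addn0 => /HG.2.
Qed.

Lemma beta_bwd {V : finType} {E1 : Type} {s r : E1 -> V} (Hacyc : acyclic s r)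
  (Hampl : amplified s r) v w (c0 : nat) : adj s r v w ->
  forall x, monoid_gen (H_gen s r) x -> monoid_gen (H_gen s r) (beta w v (- c0%:Z) x).
Proof.
move=> Hvw; have nvw := no_loop Hacyc _ _ Hvw.
have Ev := emitter_of_adj Hampl _ _ Hvw.
apply: M_ind.
- rewrite beta0; exact: mg0.
- by move=> x y Mx My; rewrite betaD; apply: mg_add.
- move=> u; case: (u =P v) => [->|nuv]; last by rewrite beta_delta_ne //; apply: mg_gen; left; exists u.
  have -> : beta w v (- c0%:Z) (delta v) = gen v (fun z => if z == w then c0 else 0%N).
    apply/ffunP => z; rewrite !ffunE; pt.
  apply: genM => //; split => // z; by case: (z =P w) => [->|].
- move=> u k HG; case: (u =P v) => [euv|nuv]; first subst u.
    have k0 := kv0 Hacyc _ _ HG.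
    have -> : beta w v (- c0%:Z) (gen v k) = gen v (fun z => k z + (if z == w then c0 else 0))%N.
      apply/ffunP => z; rewrite !ffunE k0; pt.
    apply: genM => //; split => // z; case: (z =P w) => [->|_]; last by rewrite addn0 => /HG.2.
    by case: (posnP (k w)) => [->|/HG.2] //.
  set k'' := fun z => if z == w then (k w - c0 * k v)%N else k z.
  have -> : beta w v (- c0%:Z) (gen u k) = gen u k'' + delta w *+ (c0 * k v - k w).
    apply/ffunP => z; rewrite !ffunE ffunMnE !ffunE /k''; pt.
  apply: mg_add; last by apply: M_mulrn; apply: mg_gen; left; exists w.
  apply: genM => //; split; first exact HG.1.
  move=> z; rewrite /k''; case: (z =P w) => [->|_]; last exact: HG.2.
  move=> h; apply: HG.2; lia.
Qed.

Definition goodmap {V : finType} {E1 : Type} (s r : E1 -> V)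
  (al : {ffun V -> int} -> {ffun V -> int}) :=
  (forall x y, al (x + y) = al x + al y) /\ bijective al /\
  (forall x, monoid_gen (H_gen s r) x -> monoid_gen (H_gen s r) (al x)) /\
  (forall y, monoid_gen (H_gen s r) y -> exists x, monoid_gen (H_gen s r) x /\ al x = y).

Lemma good_id {V : finType} {E1 : Type} (s r : E1 -> V) : goodmap s r id.
Proof.
split => //; split; first by exists id.
by split => // y My; exists y.
Qed.

Lemma good_comp {V : finType} {E1 : Type} (s r : E1 -> V) a b :
  goodmap s r a -> goodmap s r b -> goodmap s r (b \o a).
Proof.
move=> [aD [abij [af ao]]] [bD [bbij [bf bo]]]; split; first by move=> x y /=; rewrite aD bD.
split; first exact: bij_comp.
split; first by move=> x Mx /=; apply: bf; apply: af.
move=> y My; have [x1 [Mx1 <-]] := bo y My; have [x [Mx <-]] := ao x1 Mx1.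
by exists x.
Qed.

Lemma good_beta {V : finType} {E1 : Type} {s r : E1 -> V} (Hacyc : acyclic s r)
  (Hampl : amplified s r) v w (c0 : nat) : adj s r v w -> goodmap s r (beta w v c0%:Z).
Proof.
move=> Hvw; have nvw := no_loop Hacyc _ _ Hvw.
split; first exact: betaD.
split.
  exists (beta w v (- c0%:Z)); first exact: beta_cancel.
  move=> x; have := beta_cancel w v (- c0%:Z) nvw x; by rewrite opprK.
split; first exact: beta_fwd.
move=> y My; exists (beta w v (- c0%:Z) y); split; first exact: beta_bwd.
have := beta_cancel w v (- c0%:Z) nvw y; by rewrite opprK.
Qed.

Definition pb (P : Prop) : bool := if ClassicalEpsilon.excluded_middle_informative P then true else false.
Lemma pbP (P : Prop) : reflect P (pb P).
Proof. rewrite /pb; case: ClassicalEpsilon.excluded_middle_informative => h; by constructor. Qed.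

Lemma allpos {V : finType} {E1 : Type} (s r : E1 -> V) (n : {ffun V -> int}) :
  [set u | n u <= 0] = set0 ->
  exists al, goodmap s r al /\ forall v, 1 <= al n v.
Proof.
move=> B0; exists id; split; first exact: good_id.
move=> v /=; have : v \notin [set u | n u <= 0] by rewrite B0 in_set0.
rewrite inE => /negP h; lia.
Qed.

Lemma aux_ineq (a b : int) (c : nat) : a <= 0 -> 1 <= b -> c = (`|a| + 1)%N ->
  1 <= a + c%:Z * b.
Proof.
move=> ha hb ->; rewrite PoszD abszE ler0_norm //.
have h : 0 <= (- a) * (b - 1) by apply: mulr_ge0; lia.
lia.
Qed.

Lemma main_ind {V : finType} {E1 : Type} {s r : E1 -> V} (Hacyc : acyclic s r)
  (Hampl : amplified s r) (N : nat) : forall n, monoid_gen (H_gen s r) n ->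
  (forall v, is_source r v -> 1 <= n v) -> (#|[set u | (n u <= 0)%R]| <= N)%N ->
  exists al, goodmap s r al /\ forall v, 1 <= al n v.
Proof.
elim: N => [|N IH] n Mn Hsrc Hcard.
  by apply: allpos; apply: cards0_eq; move: Hcard; rewrite leqn0 => /eqP.
case: (set_0Vmem [set u | n u <= 0]) => [B0|[w0 Hw0]]; first exact: allpos.
pose anc (w : V) := [set u | pb (clos_trans V (adj s r) u w)].
case: (arg_minnP (fun i => #|anc i|) Hw0) => w HwB Hmin.
have HwB' : w \in [set u | n u <= 0] := HwB.
have nw : n w <= 0 by move: HwB'; rewrite inE.
have [e re] : exists e, r e = w.
  apply: NNPP => h; have := Hsrc w (fun e re => h (ex_intro _ e re)); lia.
set v := s e.
have Hvw : adj s r v w by exists e.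
have nv : 1 <= n v.
  case: (boolP (v \in [set u | n u <= 0])) => [vB|]; last by rewrite inE => /negP h; lia.
  have := Hmin v vB.
  have : anc v \proper anc w.
    apply/properP; split.
      apply/subsetP => u; rewrite !inE => /pbP h; apply/pbP.
      exact: t_trans h (t_step _ _ _ _ Hvw).
    exists v; first by rewrite inE; apply/pbP; apply: t_step.
    by rewrite inE; apply/pbP; apply: Hacyc.
  move=> /proper_card; lia.
set c0 := (`|n w| + 1)%N.
set n' := beta w v c0%:Z n.
have nvw := no_loop Hacyc _ _ Hvw.
have n'ne : forall u, u != w -> n' u = n u.
  by move=> u /negbTE h; rewrite /n' ffunE h addr0.
have n'w : 1 <= n' w.
  have -> : n' w = n w + c0%:Z * n v by rewrite /n' ffunE eqxx.
  exact (aux_ineq _ _ _ nw nv (erefl _)).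
have Mn' : monoid_gen (H_gen s r) n' by apply: beta_fwd.
have Hsrc' : forall u, is_source r u -> 1 <= n' u.
  move=> u Hu; case: (u =P w) => [->|/eqP h] //; rewrite n'ne //; exact: Hsrc.
have Hcard' : (#|[set u | (n' u <= 0)%R]| <= N)%N.
  have : [set u | n' u <= 0] \subset [set u | n u <= 0] :\ w.
    apply/subsetP => u; rewrite !inE; case: (u =P w) => [->|/eqP h] /=.
      by move=> h; have := Order.POrderTheory.le_trans n'w h.
    by rewrite n'ne.
  move=> /subset_leq_card; move: (cardsD1 w [set u | n u <= 0]); rewrite HwB' /= => eB hsub.
  apply: leq_trans hsub _; rewrite -ltnS; apply: leq_trans _ Hcard; by rewrite eB.
have [al [Gal Hal]] := IH n' Mn' Hsrc' Hcard'.
exists (al \o beta w v c0%:Z); split; first exact: good_comp (good_beta Hacyc Hampl _ _ _ Hvw) Gal.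
exact: Hal.
Qed.

Theorem lemma3p9 (V : finType) (E1 : Type) (s r : E1 -> V)
  (Hacyc : acyclic s r) (Hampl : amplified s r)
  (n : {ffun V -> int})
  (HnH : monoid_gen (H_gen s r) n)
  (Hn : forall v : V, is_source r v -> 1 <= n v) :
  exists (m : {ffun V -> int}) (alpha : {ffun V -> int} -> {ffun V -> int}),
    monoid_gen (H_gen s r) m /\
    (forall v : V, 1 <= m v) /\
    (forall x y, alpha (x + y) = alpha x + alpha y) /\
    bijective alpha /\
    (forall x, monoid_gen (H_gen s r) x -> monoid_gen (H_gen s r) (alpha x)) /\
    (forall y, monoid_gen (H_gen s r) y ->
       exists x, monoid_gen (H_gen s r) x /\ alpha x = y) /\
    alpha n = m.
Proof.
have [al [[aD [abij [af ao]]] Hal]] := main_ind Hacyc Hampl _ n HnH Hn (leqnn _).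
exists (al n), al; split; first exact: af.
by do 5 (split => //).
Qed.
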